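(* Let $Y\sim$ exGPD$(\sigma,\xi)$ with $\sigma>0$, and let $u\in\mathbb{R}$ (with $u<\log(-\sigma/\xi)$ when $\xi<0$). The mean excess function $e_Y(u)=E[Y-u\mid Y>u]$ is finite and given by $$e_Y(u)=\begin{cases}\big(\bar F_Y(u)\big)^{-1}\,B\!\left(\left(1+\xi e^{u}/\sigma\right)^{-1};\,1/\xi,\,0\right), & \xi>0,\\[2pt] \big(\bar F_Y(u)\big)^{-1}\,B\!\left(1+\xi e^{u}/\sigma;\,1-1/\xi,\,0\right), & \xi<0,\\[2pt] \exp\!\left(e^{u}/\sigma\right)\,\Gamma\!\left(0,\,e^{u}/\sigma\right), & \xi=0,\end{cases}$$ where $\bar F_Y(u)=(1+\xi e^u/\sigma)^{-1/\xi}$ for $\xi\neq0$, $B(x;a,0)=\int_0^x t^{a-1}(1-t)^{-1}\,dt$ for $x\in(0,1)$, $a>0$, and $\Gamma(s,x)=\int_x^\infty t^{s-1}e^{-t}\,dt$. Consequently, the conditional tail expectation at level $p\in(0,1)$ is $E[Y\mid Y>y_p]=y_p+e_Y(y_p)$, where $y_p=\log\!\big(\frac{\sigma}{\xi}((1-p)^{-\xi}-1)\big)$ for $\xi\neq0$ is the $p$-quantile of $Y$.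
   Context: For $\sigma>0$ and $\xi\in\mathbb{R}$, the generalized Pareto distribution GPD$(\sigma,\xi)$ has distribution function $G(x)=1-(1+\xi x/\sigma)^{-1/\xi}$ for $\xi\neq 0$, with support $x\ge 0$ if $\xi>0$ and $0\le x\le -\sigma/\xi$ if $\xi<0$; for $\xi=0$ it is $G(x)=1-e^{-x/\sigma}$, $x\ge 0$. A random variable $Y$ has the exponentiated generalized Pareto distribution exGPD$(\sigma,\xi)$ if $Y=\log X$ with $X\sim$ GPD$(\sigma,\xi)$. Equivalently, for $\xi\neq0$ its distribution function is $F_Y(y)=1-(1+\xi e^y/\sigma)^{-1/\xi}$, with support $y\in\mathbb{R}$ if $\xi>0$ and $-\infty<y\le \log(-\sigma/\xi)$ if $\xi<0$. For $\xi=0$ it is $F_Y(y)=1-\exp(-e^{y}/\sigma)$, $y\in\mathbb{R}$. Its density is $f_Y(y)=\frac{e^y}{\sigma}(1+\xi e^y/\sigma)^{-1/\xi-1}$ on the support for $\xi\neq0$, and $f_Y(y)=\frac{1}{\sigma}e^{y-e^y/\sigma}$ for $\xi=0$. We write $\bar F_Y=1-F_Y$. *)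

(* Defs.v *)
From Stdlib Require Import Reals Lra.
Open Scope R_scope.

(** Improper Riemann integral over the open interval (a, b), where the upper
    end b is either a real number ([Some B]) or +infinity ([None]).
    [has_improper_integral f a b l] : f is Riemann integrable on every compact
    [c,d] inside (a,b) and RiemannInt f c d -> l as c -> a+ and d -> b-. *)
Definition below_upper (b : option R) (d : R) : Prop :=
  match b with None => True | Some B => d < B end.

Definition near_upper (b : option R) (delta M d : R) : Prop :=
  match b with None => M < d | Some B => B - delta < d < B end.

Definition has_improper_integral (f : R -> R) (a : R) (b : option R) (l : R) : Prop :=
  (forall c d, a < c -> c <= d -> below_upper b d -> inhabited (Riemann_integrable f c d)) /\
  (forall eps, 0 < eps -> exists delta M, 0 < delta /\
     forall c d (pr : Riemann_integrable f c d),
       a < c < a + delta -> near_upper b delta M d ->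
       Rabs (RiemannInt pr - l) < eps).

Definition is_incBeta0 (x a v : R) : Prop :=
  has_improper_integral (fun t => Rpower t (a - 1) / (1 - t)) 0 (Some x) v.

Definition is_uppGamma (s x v : R) : Prop :=
  has_improper_integral (fun t => Rpower t (s - 1) * exp (- t)) x None v.

Definition exgpd_sf (sigma xi y : R) : R :=
  if Req_EM_T xi 0 then exp (- (exp y / sigma))
  else Rpower (1 + xi * exp y / sigma) (- / xi).

Definition exgpd_cdf (sigma xi y : R) : R := 1 - exgpd_sf sigma xi y.

Definition exgpd_pdf (sigma xi y : R) : R :=
  if Req_EM_T xi 0 then / sigma * exp (y - exp y / sigma)
  else exp y / sigma * Rpower (1 + xi * exp y / sigma) (- / xi - 1).

Definition exgpd_upper (sigma xi : R) : option R :=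
  if Rlt_dec xi 0 then Some (ln (- sigma / xi)) else None.

(** e is the mean excess E[Y - u | Y > u]:  E[(Y-u) 1{Y>u}] = e * P(Y > u),
    with the expectation an (improper) integral against the density. *)
Definition is_mean_excess (sigma xi u e : R) : Prop :=
  has_improper_integral (fun y => (y - u) * exgpd_pdf sigma xi y) u
    (exgpd_upper sigma xi) (e * exgpd_sf sigma xi u).

(** c is E[Y | Y > y]:  E[Y 1{Y>y}] = c * P(Y > y). *)
Definition is_cond_tail_exp (sigma xi y c : R) : Prop :=
  has_improper_integral (fun t => t * exgpd_pdf sigma xi t) y
    (exgpd_upper sigma xi) (c * exgpd_sf sigma xi y).

Definition exgpd_quantile (sigma xi p : R) : R :=
  ln (sigma / xi * (Rpower (1 - p) (- xi) - 1)).

(* Main.v *)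
Require Import Defs.
From Stdlib Require Import Reals Lra.
From Coquelicot Require Import Coquelicot.
Open Scope R_scope.

Definition LR (F : R -> R) (a L : R) : Prop :=
  forall eps, 0 < eps -> exists delta, 0 < delta /\
    forall c, a < c < a + delta -> Rabs (F c - L) < eps.

Definition LU (F : R -> R) (b : option R) (L : R) : Prop :=
  forall eps, 0 < eps -> exists delta M, 0 < delta /\
    forall d, near_upper b delta M d -> Rabs (F d - L) < eps.

Lemma below_mono b x y : x <= y -> below_upper b y -> below_upper b x.
Proof. destruct b; simpl; auto; lra. Qed.

Lemma ftc g F c d : c <= d ->
  (forall x, c <= x <= d -> is_derive F x (g x) /\ continuous g x) ->
  ex_RInt g c d /\ RInt g c d = F d - F c.
Proof.
  intros Hcd H.
  assert (Hr : forall x, Rmin c d <= x <= Rmax c d -> c <= x <= d).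
  { intros x; rewrite Rmin_left, Rmax_right; auto. }
  assert (HI := is_RInt_derive F g c d (fun x Hx => proj1 (H x (Hr x Hx)))
                                   (fun x Hx => proj2 (H x (Hr x Hx)))).
  split. eexists; eauto.
  apply is_RInt_unique in HI. rewrite HI. reflexivity.
Qed.

Lemma imp g F a b La Lb : below_upper b a ->
  (forall x, a < x -> below_upper b x -> is_derive F x (g x) /\ continuous g x) ->
  LR F a La -> LU F b Lb -> has_improper_integral g a b (Lb - La).
Proof.
  intros Hab HD HL HU. split.
  - intros c d Hc Hcd Hd.
    destruct (ftc g F c d Hcd) as [Hex _].
    { intros x Hx. apply HD. lra. apply below_mono with d; tauto. }
    constructor. now apply ex_RInt_Reals_0.
  - intros eps Heps.
    destruct (HL (eps/2)) as [d1 [Hd1 H1]]; [lra|].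
    destruct (HU (eps/2)) as [d2 [M [Hd2 H2]]]; [lra|].
    assert (key : forall c d (pr : Riemann_integrable g c d), a < c < a + d1 ->
              c <= d -> below_upper b d -> near_upper b d2 M d ->
              Rabs (RiemannInt pr - (Lb - La)) < eps).
    { intros c d pr Hc Hcd Hbd Hn.
      destruct (ftc g F c d Hcd) as [_ HE].
      { intros x Hx. apply HD. lra. apply below_mono with d; tauto. }
      rewrite <- RInt_Reals, HE.
      specialize (H1 c Hc). specialize (H2 d Hn).
      apply Rabs_def2 in H1. apply Rabs_def2 in H2. apply Rabs_def1; lra. }
    destruct b as [B|]; simpl in *.
    + exists (Rmin (Rmin d1 d2) ((B - a)/2)), M. split.
      { repeat apply Rmin_pos; lra. }
      intros c d pr Hc Hd.
      assert (m1 := Rmin_l (Rmin d1 d2) ((B - a)/2)).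
      assert (m2 := Rmin_r (Rmin d1 d2) ((B - a)/2)).
      assert (m3 := Rmin_l d1 d2). assert (m4 := Rmin_r d1 d2).
      apply key; simpl; lra.
    + exists (Rmin d1 1), (Rmax M (a + 1)). split.
      { apply Rmin_pos; lra. }
      intros c d pr Hc Hd.
      assert (m1 := Rmin_l d1 1). assert (m2 := Rmin_r d1 1).
      assert (m3 := Rmax_l M (a+1)). assert (m4 := Rmax_r M (a+1)).
      apply key; simpl; auto; lra.
Qed.

Lemma dR_minus f g x df dg : is_derive f x df -> is_derive g x dg ->
  is_derive (fun y => f y - g y) x (df - dg).
Proof. intros; exact (is_derive_minus f g x df dg H H0). Qed.
Lemma dR_plus f g x df dg : is_derive f x df -> is_derive g x dg ->
  is_derive (fun y => f y + g y) x (df + dg).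
Proof. intros; exact (is_derive_plus f g x df dg H H0). Qed.
Lemma dR_mult f g x df dg : is_derive f x df -> is_derive g x dg ->
  is_derive (fun y => f y * g y) x (df * g x + f x * dg).
Proof. intros; exact (@is_derive_mult R_AbsRing f g x df dg H H0 Rmult_comm). Qed.
Lemma dR_eq (f : R -> R) (x l l' : R) : is_derive f x l -> l = l' -> is_derive f x l'.
Proof. intros H ->; exact H. Qed.
Lemma cR_mult (f g : R -> R) (x : R) : continuous f x -> continuous g x -> continuous (fun y => f y * g y) x.
Proof. intros; exact (continuous_mult f g x H H0). Qed.
Lemma cR_minus (f g : R -> R) (x : R) : continuous f x -> continuous g x -> continuous (fun y => f y - g y) x.
Proof. intros; exact (continuous_minus f g x H H0). Qed.

Lemma cont_eps (f : R -> R) (x : R) : continuous f x -> forall eps, 0 < eps ->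
  exists delta, 0 < delta /\ forall y, Rabs (y - x) < delta -> Rabs (f y - f x) < eps.
Proof.
  intros Hc eps He. apply continuity_pt_filterlim in Hc.
  destruct (Hc eps He) as [d [Hd H]].
  exists d; split; auto. intros y Hy.
  destruct (Req_dec y x) as [->|Hne].
  - unfold Rminus; rewrite Rplus_opp_r, Rabs_R0; auto.
  - apply (H y). split. split; [exact I|auto]. exact Hy.
Qed.

Lemma cont_LR (F : R -> R) (a : R) : continuous F a -> LR F a (F a).
Proof.
  intros Hc eps He. destruct (cont_eps F a Hc eps He) as [d [Hd H]].
  exists d; split; auto. intros c Hc'. apply H. apply Rabs_def1; lra.
Qed.

Lemma cont_LU (F : R -> R) (B : R) : continuous F B -> LU F (Some B) (F B).
Proof.
  intros Hc eps He. destruct (cont_eps F B Hc eps He) as [d [Hd H]].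
  exists d, 0; split; auto. intros c Hc'. simpl in Hc'. apply H. apply Rabs_def1; lra.
Qed.

Lemma LU_minus F G b L1 L2 : LU F b L1 -> LU G b L2 -> LU (fun y => F y - G y) b (L1 - L2).
Proof.
  intros H1 H2 eps He.
  destruct (H1 (eps/2)) as [d1 [M1 [Hd1 K1]]]; [lra|].
  destruct (H2 (eps/2)) as [d2 [M2 [Hd2 K2]]]; [lra|].
  exists (Rmin d1 d2), (Rmax M1 M2). split. apply Rmin_pos; lra.
  intros d Hd.
  assert (m1 := Rmin_l d1 d2). assert (m2 := Rmin_r d1 d2).
  assert (m3 := Rmax_l M1 M2). assert (m4 := Rmax_r M1 M2).
  assert (A1 : near_upper b d1 M1 d) by (destruct b; simpl in *; lra).
  assert (A2 : near_upper b d2 M2 d) by (destruct b; simpl in *; lra).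
  specialize (K1 d A1); specialize (K2 d A2).
  apply Rabs_def2 in K1; apply Rabs_def2 in K2; apply Rabs_def1; lra.
Qed.

Lemma LU_scal F b L k : LU F b L -> LU (fun y => k * F y) b (k * L).
Proof.
  intros H eps He.
  destruct (H (eps / (Rabs k + 1))) as [d [M [Hd K]]].
  { apply Rdiv_lt_0_compat; auto. assert (0 <= Rabs k) by apply Rabs_pos. lra. }
  exists d, M; split; auto. intros y Hy. specialize (K y Hy).
  replace (k * F y - k * L) with (k * (F y - L)) by ring.
  rewrite Rabs_mult.
  assert (0 <= Rabs k) by apply Rabs_pos.
  assert (Hk : Rabs k * Rabs (F y - L) <= Rabs k * (eps / (Rabs k + 1))).
  { apply Rmult_le_compat_l; lra. }
  assert (Rabs k * (eps / (Rabs k + 1)) < eps).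
  { unfold Rdiv. replace eps with (eps * ((Rabs k + 1) * / (Rabs k + 1))) at 2.
    2: { rewrite Rinv_r. ring. lra. }
    assert (0 < / (Rabs k + 1)) by (apply Rinv_0_lt_compat; lra).
    nra. }
  lra.
Qed.

Lemma LU_ext F G b L : (forall y, G y = F y) -> LU F b L -> LU G b L.
Proof. intros E H eps He. destruct (H eps He) as [d [M [Hd K]]].
  exists d, M; split; auto. intros; rewrite E; auto. Qed.


Lemma locally_dom b y : below_upper b y -> locally y (fun z => below_upper b z).
Proof.
  destruct b as [B|]; simpl; intros H.
  - exact (open_lt B y H).
  - apply filter_forall. auto.
Qed.

Lemma cont_of_der (f : R -> R) x l : is_derive f x l -> continuous f x.
Proof. intros H. apply (@ex_derive_continuous R_AbsRing R_NormedModule). exists l; exact H. Qed.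

Lemma exR_cont (f : R -> R) a b : (forall z, Rmin a b <= z <= Rmax a b -> continuous f z) ->
  ex_RInt f a b.
Proof. intros H. exact (@ex_RInt_continuous R_CompleteNormedModule f a b H). Qed.

Lemma gen b (s pdf : R -> R) u :
  below_upper b u ->
  (forall y, below_upper b y -> is_derive s y (- pdf y)) ->
  (forall y, below_upper b y -> continuous pdf y) ->
  (forall y, below_upper b y -> 0 < s y) ->
  (exists (h H : R -> R) K, forall y, u <= y -> below_upper b y ->
      is_derive H y (h y) /\ continuous h y /\ s y <= h y /\ H y <= K) ->
  LU (fun y => (y - u) * s y) b 0 ->
  LU s b 0 ->
  exists Sinf, LU (RInt s u) b Sinf /\
    (forall y, below_upper b y -> is_derive (RInt s u) y (s y)) /\
    has_improper_integral (fun y => (y - u) * pdf y) u b Sinf /\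
    has_improper_integral (fun y => y * pdf y) u b (Sinf + u * s u).
Proof.
  intros Hu H1 H2 H3 [h [H [K H4]]] H5 H6.
  assert (Cs : forall y, below_upper b y -> continuous s y).
  { intros y Hy. eapply cont_of_der; apply H1; auto. }
  assert (Ex : forall x y, below_upper b x -> below_upper b y -> ex_RInt s x y).
  { intros x y Hx Hy. apply exR_cont. intros z Hz. apply Cs.
    apply below_mono with (Rmax x y). lra.
    unfold Rmax; destruct (Rle_dec x y); auto. }
  assert (DS : forall y, below_upper b y -> is_derive (RInt s u) y (s y)).
  { intros y Hy. apply (is_derive_RInt s (RInt s u) u y); [|apply Cs; auto].
    apply filter_imp with (2 := locally_dom b y Hy).
    intros z Hz. apply (@RInt_correct R_CompleteNormedModule). apply Ex; auto. }
  set (S := RInt s u).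
  assert (S0 : S u = 0). { unfold S. rewrite RInt_point. reflexivity. }
  assert (Mono : forall y1 y2, u <= y1 <= y2 -> below_upper b y2 -> S y1 <= S y2).
  { intros y1 y2 Hy Hb.
    assert (Hb1 : below_upper b y1) by (apply below_mono with y2; [lra|exact Hb]).
    assert (E := RInt_Chasles s u y1 y2 (Ex u y1 Hu Hb1) (Ex y1 y2 Hb1 Hb)).
    unfold S. rewrite <- E.
    assert (0 <= RInt s y1 y2).
    { apply RInt_ge_0. lra. apply Ex; auto. intros x Hx. left. apply H3.
      apply below_mono with y2; auto; lra. }
    change (plus (RInt s u y1) (RInt s y1 y2)) with (RInt s u y1 + RInt s y1 y2). lra. }
  assert (Bd : forall y, u <= y -> below_upper b y -> S y <= K - H u).
  { intros y Hy Hb.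
    destruct (ftc h H u y Hy) as [Eh Eq].
    { intros x Hx. assert (Hbx : below_upper b x) by (apply below_mono with y; [lra|exact Hb]).
      destruct (H4 x (proj1 Hx) Hbx) as [A1 [A2 _]]. split; auto. }
    assert (S y <= RInt h u y).
    { unfold S. apply RInt_le; [exact Hy| apply Ex; auto | exact Eh |]. intros x Hx.
      destruct (H4 x) as [_ [_ [Hl _]]]; [lra| apply below_mono with y; [lra|exact Hb] | exact Hl]. }
    destruct (H4 y Hy Hb) as [_ [_ [_ HK]]]. lra. }
  set (E := fun z => exists y, u <= y /\ below_upper b y /\ z = S y).
  destruct (completeness E) as [Sinf [Hub Hlub]].
  { exists (K - H u). intros z [y [Hy [Hb ->]]]. apply Bd; auto. }
  { exists (S u). exists u. repeat split; auto. lra. }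
  assert (LS : LU S b Sinf).
  { intros eps He.
    assert (Ex0 : exists y0, u <= y0 /\ below_upper b y0 /\ Sinf - eps < S y0).
    { apply Classical_Prop.NNPP. intro Hn.
      assert (Sinf <= Sinf - eps); [|lra].
      apply Hlub. intros z [y [Hy [Hb ->]]].
      apply Rnot_lt_le. intro Hlt. apply Hn. exists y; auto. }
    destruct Ex0 as [y0 [Hy0 [Hb0 Hlt]]].
    assert (Key : forall d, y0 <= d -> below_upper b d -> Rabs (S d - Sinf) < eps).
    { intros d Hd Hbd. assert (S y0 <= S d) by (apply Mono; auto; lra).
      assert (S d <= Sinf) by (apply Hub; exists d; repeat split; auto; lra).
      apply Rabs_def1; lra. }
    destruct b as [B|]; simpl in *.
    - exists (B - y0), 0. split. lra. intros d Hd. apply Key; lra.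
    - exists 1, y0. split. lra. intros d Hd. apply Key; auto; lra. }
  exists Sinf. split; auto. split; auto.
  set (F := fun y => S y - (y - u) * s y).
  assert (DF : forall y, below_upper b y -> is_derive F y ((y - u) * pdf y)).
  { intros y Hy. unfold F. eapply dR_eq.
    apply dR_minus. apply DS; auto. apply dR_mult. 
    apply dR_minus. apply is_derive_id. apply is_derive_const. apply H1; auto.
    simpl. change (one) with 1. change (zero) with 0. ring. }
  assert (Cpdf : forall y, below_upper b y -> continuous (fun y => (y - u) * pdf y) y).
  { intros y Hy. apply cR_mult. apply cR_minus. apply continuous_id.
    apply continuous_const. apply H2; auto. }
  assert (LF : LR F u 0).
  { replace 0 with (F u). apply cont_LR. eapply cont_of_der.
    apply DF; auto. unfold F. rewrite S0. ring. }
  assert (UF : LU F b Sinf).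
  { replace Sinf with (Sinf - 0) by ring. apply LU_minus; auto. }
  split.
  - cut (has_improper_integral (fun y => (y - u) * pdf y) u b (Sinf - 0)).
    { rewrite Rminus_0_r; auto. }
    apply imp with F; [auto| |auto|auto].
    intros x Hx Hb. split. apply DF; auto. apply Cpdf; auto.
  - set (G := fun y => F y - u * s y).
    replace (Sinf + u * s u) with ((Sinf - u * 0) - G u).
    2: { unfold G, F. rewrite S0. ring. }
    apply imp with G; [auto| | |].
    + intros x Hx Hb. split.
      * unfold G. eapply dR_eq. apply dR_minus. apply DF; auto.
        apply is_derive_scal. apply H1; auto. ring.
      * apply cR_mult. apply continuous_id. apply H2; auto.
    + apply cont_LR. eapply cont_of_der. unfold G.
      apply dR_minus. apply DF; auto. apply is_derive_scal. apply H1; auto.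
    + apply LU_minus; auto. apply LU_scal; auto.
Qed.

Definition ww (sigma xi y : R) := 1 + xi * exp y / sigma.
Definition sN sigma xi y := Rpower (ww sigma xi y) (- / xi).
Definition pN sigma xi y := exp y / sigma * Rpower (ww sigma xi y) (- / xi - 1).

Lemma der_sN sigma xi y : 0 < sigma -> xi <> 0 -> 0 < ww sigma xi y ->
  is_derive (sN sigma xi) y (- pN sigma xi y).
Proof.
  intros Hs Hx Hw. unfold sN, pN, Rpower, ww in *.
  auto_derive. exact Hw.
  set (W := 1 + xi * exp y / sigma) in *.
  replace (1 + xi * exp y * / sigma) with W by (unfold W, Rdiv; ring).
  replace ((- / xi - 1) * ln W) with (- / xi * ln W + - ln W) by ring.
  rewrite exp_plus, exp_Ropp, exp_ln by exact Hw.
  field. split; lra.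
Qed.

Lemma cont_of_ex (f : R -> R) x : ex_derive f x -> continuous f x.
Proof. intros H. apply (@ex_derive_continuous R_AbsRing R_NormedModule). exact H. Qed.

Lemma exp_le' x y : x <= y -> exp x <= exp y.
Proof. intros [H|H]. left; apply exp_increasing; auto. subst; lra. Qed.

Lemma ln_le' x y : 0 < x -> x <= y -> ln x <= ln y.
Proof. intros Hx [H|H]. left; apply ln_increasing; auto. subst; lra. Qed.

Lemma exp_sq_bound t : 0 <= t -> (t/2) * (t/2) < exp t.
Proof.
  intros Ht. replace t with (t/2 + t/2) at 3 by field. rewrite exp_plus.
  assert (t/2 < exp (t/2)).
  { destruct (Req_dec (t/2) 0) as [E|E]. rewrite E, exp_0; lra.
    assert (H := exp_ineq1 (t/2) E). lra. }
  assert (0 <= t/2) by lra. nra.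
Qed.

Lemma decay k u : 0 < k -> LU (fun y => (y - u) * exp (- (k * y))) None 0.
Proof.
  intros Hk eps He.
  set (A := exp (- (k * u))).
  assert (HA : 0 < A) by apply exp_pos.
  exists 1, (u + 4 * A / (k * k * eps)). split. lra. simpl. intros y Hy.
  set (z := y - u).
  assert (Hz : 4 * A / (k * k * eps) < z) by (unfold z; lra).
  assert (Hq : 0 < 4 * A / (k * k * eps)).
  { apply Rdiv_lt_0_compat. lra. apply Rmult_lt_0_compat; [nra|lra]. }
  replace (z * exp (- (k * y)) - 0) with (A * (z / exp (k * z))).
  2: { unfold A, z. replace (- (k * y)) with (- (k * u) + - (k * (y - u))) by ring.
       rewrite exp_plus, !exp_Ropp. unfold Rdiv; ring. }
  assert (Hb := exp_sq_bound (k * z)). 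
  assert (0 < k * z) by nra.
  assert (Hez : 0 < exp (k*z)) by apply exp_pos.
  rewrite Rabs_right.
  2: { apply Rle_ge. apply Rmult_le_pos. lra. unfold Rdiv. apply Rmult_le_pos. lra. left; apply Rinv_0_lt_compat; lra. }
  (* A * z / exp(kz) < A * z / (kz/2)^2 = 4A/(k^2 z) < eps *)
  assert (z / exp (k * z) < z / ((k*z/2) * (k*z/2))).
  { unfold Rdiv. apply Rmult_lt_compat_l. lra. apply Rinv_lt_contravar.
    apply Rmult_lt_0_compat; nra. lra. }
  assert (E2 : z / ((k*z/2) * (k*z/2)) = 4 / (k * k * z)) by (field; split; lra).
  assert (A * (4 / (k * k * z)) < eps).
  { replace (A * (4 / (k * k * z))) with ((4 * A / (k * k * eps)) * eps / z) by (field; repeat split; lra).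
    apply (Rmult_lt_reg_r z). lra. unfold Rdiv. rewrite Rmult_assoc, Rinv_l by lra. nra. }
  assert (A * (z / exp (k * z)) < A * (4 / (k * k * z))).
  { apply Rmult_lt_compat_l; auto. lra. }
  lra.
Qed.

Lemma squeeze_None (f g : R -> R) u C : 0 <= C ->
  (forall y, u < y -> 0 <= f y <= C * g y) -> LU g None 0 -> LU f None 0.
Proof.
  intros HC Hfg Hg eps He.
  destruct (Hg (eps / (C + 1))) as [d [M [Hd K]]].
  { apply Rdiv_lt_0_compat; lra. }
  exists 1, (Rmax M u). split. lra. simpl. intros y Hy.
  assert (m1 := Rmax_l M u). assert (m2 := Rmax_r M u).
  specialize (K y ltac:(simpl; lra)). specialize (Hfg y ltac:(lra)).
  rewrite Rminus_0_r in *. apply Rabs_def2 in K.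
  assert (C * g y <= C * (eps / (C+1))) by (apply Rmult_le_compat_l; lra).
  assert (C * (eps / (C+1)) < eps).
  { replace (C * (eps / (C+1))) with (eps * (C / (C+1))) by (field; lra).
    assert (C / (C+1) < 1). { apply (Rmult_lt_reg_r (C+1)). lra. unfold Rdiv. rewrite Rmult_assoc, Rinv_l by lra. lra. }
    nra. }
  rewrite Rabs_right; lra.
Qed.

Lemma squeeze_Some (f g : R -> R) u B C : u < B -> 0 <= C ->
  (forall y, u < y < B -> 0 <= f y <= C * g y) -> LU g (Some B) 0 -> LU f (Some B) 0.
Proof.
  intros HuB HC Hfg Hg eps He.
  destruct (Hg (eps / (C + 1))) as [d [M [Hd K]]].
  { apply Rdiv_lt_0_compat; lra. }
  exists (Rmin d (B - u)), 0. split. apply Rmin_pos; lra. simpl. intros y Hy.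
  assert (m1 := Rmin_l d (B - u)). assert (m2 := Rmin_r d (B - u)).
  specialize (K y ltac:(simpl; lra)). specialize (Hfg y ltac:(lra)).
  rewrite Rminus_0_r in *. apply Rabs_def2 in K.
  assert (C * g y <= C * (eps / (C+1))) by (apply Rmult_le_compat_l; lra).
  assert (C * (eps / (C+1)) < eps).
  { replace (C * (eps / (C+1))) with (eps * (C / (C+1))) by (field; lra).
    assert (C / (C+1) < 1). { apply (Rmult_lt_reg_r (C+1)). lra. unfold Rdiv. rewrite Rmult_assoc, Rinv_l by lra. lra. }
    nra. }
  rewrite Rabs_right; lra.
Qed.

Definition GenConc b (s pdf : R -> R) u Sinf :=
  LU (RInt s u) b Sinf /\
  (forall y, below_upper b y -> is_derive (RInt s u) y (s y)) /\
  has_improper_integral (fun y => (y - u) * pdf y) u b Sinf /\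
  has_improper_integral (fun y => y * pdf y) u b (Sinf + u * s u).

Lemma ww_pos_p sigma xi y : 0 < sigma -> 0 < xi -> 0 < ww sigma xi y.
Proof.
  intros Hs Hx. unfold ww. assert (0 < xi * exp y / sigma).
  { apply Rdiv_lt_0_compat; auto. apply Rmult_lt_0_compat; auto. apply exp_pos. }
  lra.
Qed.

Lemma cont_pN sigma xi y : 0 < sigma -> xi <> 0 -> 0 < ww sigma xi y ->
  continuous (pN sigma xi) y.
Proof.
  intros Hs Hx Hw. apply cont_of_ex. unfold pN, Rpower, ww in *.
  auto_derive. replace (1 + xi * exp y * / sigma) with (1 + xi * exp y / sigma) by reflexivity. exact Hw.
Qed.

Lemma sN_le_pos sigma xi y : 0 < sigma -> 0 < xi ->
  sN sigma xi y <= Rpower (xi / sigma) (- / xi) * exp (- (/ xi * y)).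
Proof.
  intros Hs Hx. unfold sN, Rpower. rewrite <- exp_plus. apply exp_le'.
  assert (Hxs : 0 < xi / sigma) by (apply Rdiv_lt_0_compat; auto).
  assert (HW := ww_pos_p sigma xi y Hs Hx).
  assert (L : ln (xi / sigma * exp y) <= ln (ww sigma xi y)).
  { apply ln_le'. apply Rmult_lt_0_compat; auto; apply exp_pos.
    unfold ww. unfold Rdiv. lra. }
  rewrite ln_mult, ln_exp in L; auto; [|apply exp_pos].
  assert (0 < / xi) by (apply Rinv_0_lt_compat; auto).
  nra.
Qed.

Lemma pos_case sigma xi u : 0 < sigma -> 0 < xi ->
  exists Sinf, GenConc None (sN sigma xi) (pN sigma xi) u Sinf.
Proof.
  intros Hs Hx.
  set (C := Rpower (xi / sigma) (- / xi)).
  assert (HC : 0 < C) by (unfold C, Rpower; apply exp_pos).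
  assert (Hsp : forall y, 0 < sN sigma xi y) by (intros; unfold sN, Rpower; apply exp_pos).
  assert (Hle := fun y => sN_le_pos sigma xi y Hs Hx). fold C in Hle.
  assert (Hdec := decay (/ xi) u (Rinv_0_lt_compat _ Hx)).
  destruct (gen None (sN sigma xi) (pN sigma xi) u) as [Sinf HS].
  - exact I.
  - intros y _. apply der_sN; auto. lra. apply ww_pos_p; auto.
  - intros y _. apply cont_pN; auto. lra. apply ww_pos_p; auto.
  - intros y _; auto.
  - exists (fun y => C * exp (- (/ xi * y))), (fun y => - (C * xi) * exp (- (/ xi * y))), 0.
    intros y _ _. split; [|split; [|split]].
    + auto_derive; auto. field. lra.
    + apply cont_of_ex. auto_derive. auto.
    + auto.
    + assert (0 < exp (- (/ xi * y))) by apply exp_pos. assert (0 < C * xi) by nra. nra.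
  - apply squeeze_None with (g := fun y => (y - u) * exp (- (/ xi * y))) (u := u) (C := C); auto.
    lra. intros y Hy. specialize (Hle y). specialize (Hsp y). split. nra.
    assert (0 <= y - u) by lra. nra.
  - apply squeeze_None with (g := fun y => (y - u) * exp (- (/ xi * y))) (u := u + 1) (C := C); auto.
    lra. intros y Hy. specialize (Hle y). specialize (Hsp y). split. lra.
    assert (0 < exp (- (/ xi * y))) by apply exp_pos. nra.
  - exists Sinf. exact HS.
Qed.

Lemma ww_pos_n sigma xi y : 0 < sigma -> xi < 0 -> y < ln (- sigma / xi) ->
  0 < ww sigma xi y /\ ww sigma xi y <= 1.
Proof.
  intros Hs Hx Hy. unfold ww.
  assert (Hq : 0 < - sigma / xi).
  { replace (- sigma / xi) with (sigma / - xi) by (field; lra). apply Rdiv_lt_0_compat; lra. }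
  assert (He : exp y < - sigma / xi).
  { rewrite <- (exp_ln (- sigma / xi)) by auto. apply exp_increasing; auto. }
  assert (Hep := exp_pos y).
  assert (E1 : xi * exp y > xi * (- sigma / xi)) by nra.
  replace (xi * (- sigma / xi)) with (- sigma) in E1 by (field; lra).
  split.
  - assert (xi * exp y / sigma > - sigma / sigma) by (unfold Rdiv; apply Rmult_gt_compat_r; [apply Rinv_0_lt_compat|]; lra).
    replace (- sigma / sigma) with (-1) in H by (field; lra). lra.
  - assert (xi * exp y / sigma <= 0).
    { unfold Rdiv. assert (0 < / sigma) by (apply Rinv_0_lt_compat; lra). assert (xi * exp y < 0) by nra. nra. }
    lra.
Qed.

Lemma sN_le1 sigma xi y : 0 < sigma -> xi < 0 -> y < ln (- sigma / xi) -> sN sigma xi y <= 1.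
Proof.
  intros Hs Hx Hy. destruct (ww_pos_n sigma xi y Hs Hx Hy) as [H1 H2].
  unfold sN, Rpower. rewrite <- exp_0. apply exp_le'.
  assert (ln (ww sigma xi y) <= 0) by (rewrite <- ln_1; apply ln_le'; auto).
  assert (0 < - / xi) by (assert (/ xi < 0) by (apply Rinv_lt_0_compat; auto); lra).
  nra.
Qed.

Lemma neg_H6 sigma xi : 0 < sigma -> xi < 0 -> LU (sN sigma xi) (Some (ln (- sigma / xi))) 0.
Proof.
  intros Hs Hx eps He.
  set (B := ln (- sigma / xi)).
  assert (Hq : 0 < - sigma / xi).
  { replace (- sigma / xi) with (sigma / - xi) by (field; lra). apply Rdiv_lt_0_compat; lra. }
  set (e' := Rmin eps (1/2)).
  assert (He' : 0 < e') by (apply Rmin_pos; lra).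
  assert (He'1 : e' <= 1/2) by apply Rmin_r.
  assert (He'2 : e' <= eps) by apply Rmin_l.
  set (k := - / xi).
  assert (Hk : 0 < k) by (unfold k; assert (/ xi < 0) by (apply Rinv_lt_0_compat; auto); lra).
  set (w0 := exp (ln e' / k)).
  assert (Hw0 : 0 < w0) by apply exp_pos.
  assert (Hle : ln e' < 0) by (rewrite <- ln_1; apply ln_increasing; lra).
  assert (Hw01 : w0 < 1).
  { unfold w0. rewrite <- exp_0. apply exp_increasing.
    unfold Rdiv. assert (0 < / k) by (apply Rinv_0_lt_compat; auto). nra. }
  exists (- ln (1 - w0)), 0. split.
  { assert (ln (1 - w0) < 0) by (rewrite <- ln_1; apply ln_increasing; lra). lra. }
  simpl. intros d Hd.
  assert (Hd1 : d < ln (- sigma / xi)) by (fold B; lra).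
  destruct (ww_pos_n sigma xi d Hs Hx Hd1) as [HW _].
  assert (Ed : exp d > (- sigma / xi) * (1 - w0)).
  { assert (exp (B - - ln (1 - w0)) < exp d) by (apply exp_increasing; lra).
    replace (B - - ln (1 - w0)) with (B + ln (1 - w0)) in H by ring.
    rewrite exp_plus in H. unfold B in H. rewrite !exp_ln in H; auto; lra. }
  assert (Ww : ww sigma xi d < w0).
  { unfold ww.
    assert (xi * exp d < xi * ((- sigma / xi) * (1 - w0))) by nra.
    replace (xi * ((- sigma / xi) * (1 - w0))) with (- sigma * (1 - w0)) in H by (field; lra).
    assert (xi * exp d / sigma < - sigma * (1 - w0) / sigma).
    { unfold Rdiv. apply Rmult_lt_compat_r. apply Rinv_0_lt_compat; lra. lra. }
    replace (- sigma * (1 - w0) / sigma) with (- (1 - w0)) in H0 by (field; lra). lra. }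
  rewrite Rminus_0_r. unfold sN, Rpower. rewrite Rabs_right by (left; apply exp_pos).
  apply Rlt_le_trans with e'; auto.
  assert (ln (ww sigma xi d) < ln w0) by (apply ln_increasing; auto).
  unfold w0 in H. rewrite ln_exp in H.
  rewrite <- (exp_ln e') by auto. apply exp_increasing. fold k.
  assert (k * ln (ww sigma xi d) < k * (ln e' / k)) by (apply Rmult_lt_compat_l; auto).
  replace (k * (ln e' / k)) with (ln e') in H0 by (field; lra). lra.
Qed.

Lemma neg_case sigma xi u : 0 < sigma -> xi < 0 -> u < ln (- sigma / xi) ->
  exists Sinf, GenConc (Some (ln (- sigma / xi))) (sN sigma xi) (pN sigma xi) u Sinf.
Proof.
  intros Hs Hx Hu.
  assert (Hsp : forall y, 0 < sN sigma xi y) by (intros; unfold sN, Rpower; apply exp_pos).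
  destruct (gen (Some (ln (- sigma / xi))) (sN sigma xi) (pN sigma xi) u) as [Sinf HS].
  - exact Hu.
  - intros y Hy. apply der_sN; auto. lra. apply ww_pos_n; auto.
  - intros y Hy. apply cont_pN; auto. lra. apply ww_pos_n; auto.
  - intros y _; auto.
  - exists (fun _ => 1), (fun y => y), (ln (- sigma / xi)).
    intros y _ Hy. simpl in Hy. split; [|split; [|split]].
    + auto_derive; auto.
    + apply continuous_const.
    + apply sN_le1; auto.
    + lra.
  - apply squeeze_Some with (g := sN sigma xi) (u := u) (C := ln (- sigma / xi) - u); auto.
    lra. intros y Hy. specialize (Hsp y). split. nra. nra.
    apply neg_H6; auto.
  - apply neg_H6; auto.
  - exists Sinf. exact HS.
Qed.

Definition s0 sigma y := exp (- (exp y / sigma)).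
Definition p0 sigma y := / sigma * exp (y - exp y / sigma).

Lemma s0_le sigma y : 0 < sigma -> s0 sigma y <= sigma * exp (- (1 * y)).
Proof.
  intros Hs. unfold s0. set (z := exp y / sigma).
  assert (Hz : 0 < z) by (apply Rdiv_lt_0_compat; auto; apply exp_pos).
  assert (H1 := exp_ineq1 z (Rgt_not_eq _ _ Hz)).
  rewrite exp_Ropp, Rmult_1_l, exp_Ropp.
  assert (Hey := exp_pos y). replace (sigma * / exp y) with (/ z) by (unfold z; field; split; lra).
  left. apply Rinv_lt_contravar. nra. lra.
Qed.

Lemma zero_case sigma u : 0 < sigma ->
  exists Sinf, GenConc None (s0 sigma) (p0 sigma) u Sinf.
Proof.
  intros Hs.
  assert (Hsp : forall y, 0 < s0 sigma y) by (intros; unfold s0; apply exp_pos).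
  assert (Hle := fun y => s0_le sigma y Hs).
  assert (Hdec := decay 1 u Rlt_0_1).
  destruct (gen None (s0 sigma) (p0 sigma) u) as [Sinf HS].
  - exact I.
  - intros y _. unfold s0, p0. auto_derive; auto.
    rewrite Rminus_def, exp_plus. unfold Rdiv. ring.
  - intros y _. apply cont_of_ex. unfold p0. auto_derive. auto.
  - intros y _; auto.
  - exists (fun y => sigma * exp (- (1 * y))), (fun y => - sigma * exp (- (1 * y))), 0.
    intros y _ _. split; [|split; [|split]].
    + auto_derive; auto. ring.
    + apply cont_of_ex. auto_derive. auto.
    + auto.
    + assert (0 < exp (- (1 * y))) by apply exp_pos. nra.
  - apply squeeze_None with (g := fun y => (y - u) * exp (- (1 * y))) (u := u) (C := sigma); auto.
    lra. intros y Hy. specialize (Hle y). specialize (Hsp y). split. nra.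
    assert (0 <= y - u) by lra. nra.
  - apply squeeze_None with (g := fun y => (y - u) * exp (- (1 * y))) (u := u + 1) (C := sigma); auto.
    lra. intros y Hy. specialize (Hle y). specialize (Hsp y). split. lra.
    assert (0 < exp (- (1 * y))) by apply exp_pos. nra.
  - exists Sinf. exact HS.
Qed.

Lemma chainS (S s phi : R -> R) t dphi : is_derive S (phi t) (s (phi t)) ->
  is_derive phi t dphi -> is_derive (fun t => S (phi t)) t (dphi * s (phi t)).
Proof. intros H1 H2. exact (is_derive_comp S phi t _ _ H1 H2). Qed.

Lemma dR_opp (f : R -> R) x l : is_derive f x l -> is_derive (fun y => - f y) x (- l).
Proof. intros H; exact (is_derive_opp f x l H). Qed.

Lemma beta_pos sigma xi u Sinf : 0 < sigma -> 0 < xi ->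
  GenConc None (sN sigma xi) (pN sigma xi) u Sinf ->
  is_incBeta0 (/ (1 + xi * exp u / sigma)) (/ xi) Sinf.
Proof.
  intros Hs Hx [LS [DS _]].
  set (S := RInt (sN sigma xi) u) in *.
  assert (S0 : S u = 0) by (unfold S; rewrite RInt_point; reflexivity).
  set (phi := fun t => ln (sigma / xi * (/ t - 1))).
  set (W := 1 + xi * exp u / sigma).
  assert (HW : 1 < W).
  { unfold W. assert (0 < xi * exp u / sigma).
    { apply Rdiv_lt_0_compat; auto. apply Rmult_lt_0_compat; auto. apply exp_pos. } lra. }
  set (x := / W).
  assert (Hx0 : 0 < x) by (apply Rinv_0_lt_compat; lra).
  assert (Hx1 : x < 1) by (unfold x; rewrite <- Rinv_1; apply Rinv_lt_contravar; lra).
  assert (Hsx : 0 < sigma / xi) by (apply Rdiv_lt_0_compat; auto).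
  set (F := fun t => - S (phi t)).
  assert (Hin : forall t, 0 < t < 1 -> 0 < / t - 1).
  { intros t Ht. assert (1 < / t); [|lra]. rewrite <- Rinv_1. apply Rinv_lt_contravar; lra. }
  assert (DF : forall t, 0 < t < 1 -> is_derive F t (Rpower t (/ xi - 1) / (1 - t))).
  { intros t Ht. assert (Ht' := Hin t Ht). unfold F. eapply dR_eq.
    apply dR_opp. apply chainS. apply DS. exact I.
    unfold phi. auto_derive. split. lra. split; [apply Rmult_lt_0_compat; auto|exact I].
    reflexivity.
    unfold phi, sN, ww, Rpower.
    rewrite exp_ln by (apply Rmult_lt_0_compat; auto).
    replace (1 + xi * (sigma / xi * (/ t - 1)) / sigma) with (/ t) by (field; repeat split; lra).
    rewrite ln_Rinv by lra.
    replace ((/ xi - 1) * ln t) with (/ xi * ln t + - ln t) by ring.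
    rewrite exp_plus, exp_Ropp, exp_ln by lra.
    replace (- / xi * - ln t) with (/ xi * ln t) by ring.
    field. repeat split; try lra. }
  assert (HF : has_improper_integral (fun t => Rpower t (/ xi - 1) / (1 - t)) 0 (Some x) (0 - - Sinf)).
  { apply imp with F.
    - simpl; auto.
    - intros t Ht Hb. simpl in Hb. split. apply DF; lra.
      apply cont_of_ex. unfold Rpower. auto_derive. repeat split; lra.
    - intros eps He. destruct (LS eps He) as [d0 [M [Hd0 K]]].
      set (A := 1 + xi * exp M / sigma).
      assert (HA : 1 < A).
      { unfold A. assert (0 < xi * exp M / sigma).
        { apply Rdiv_lt_0_compat; auto. apply Rmult_lt_0_compat; auto. apply exp_pos. } lra. }
      exists (Rmin x (/ A)). split. apply Rmin_pos; auto. apply Rinv_0_lt_compat; lra.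
      intros t Ht. assert (m1 := Rmin_l x (/ A)). assert (m2 := Rmin_r x (/ A)).
      assert (Ht1 : A < / t).
      { rewrite <- (Rinv_inv A). apply Rinv_lt_contravar. apply Rmult_lt_0_compat; lra. lra. }
      assert (Hp : M < phi t).
      { unfold phi. rewrite <- (ln_exp M). apply ln_increasing. apply exp_pos.
        replace (exp M) with (sigma / xi * (A - 1)) by (unfold A; field; lra).
        apply Rmult_lt_compat_l; auto. lra. }
      specialize (K (phi t) Hp). unfold F.
      replace (- S (phi t) - - Sinf) with (- (S (phi t) - Sinf)) by ring.
      rewrite Rabs_Ropp. exact K.
    - replace 0 with (F x).
      + apply cont_LU. eapply cont_of_der. apply DF; lra.
      + unfold F, phi, x. rewrite Rinv_inv.
        replace (sigma / xi * (W - 1)) with (exp u) by (unfold W; field; lra).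
        rewrite ln_exp, S0. ring. }
  unfold is_incBeta0. replace Sinf with (0 - - Sinf) by ring. exact HF.
Qed.

Lemma beta_neg sigma xi u Sinf : 0 < sigma -> xi < 0 -> u < ln (- sigma / xi) ->
  GenConc (Some (ln (- sigma / xi))) (sN sigma xi) (pN sigma xi) u Sinf ->
  is_incBeta0 (1 + xi * exp u / sigma) (1 - / xi) Sinf.
Proof.
  intros Hs Hx Hu [LS [DS _]].
  set (S := RInt (sN sigma xi) u) in *.
  assert (S0 : S u = 0) by (unfold S; rewrite RInt_point; reflexivity).
  set (B := ln (- sigma / xi)) in *.
  assert (Hq : 0 < - sigma / xi).
  { replace (- sigma / xi) with (sigma / - xi) by (field; lra). apply Rdiv_lt_0_compat; lra. }
  set (phi := fun t => ln (sigma / xi * (t - 1))).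
  destruct (ww_pos_n sigma xi u Hs Hx Hu) as [Hw0 Hw1].
  set (x := 1 + xi * exp u / sigma).
  assert (Hx0 : 0 < x) by exact Hw0.
  assert (Hx1 : x < 1).
  { unfold x. assert (xi * exp u < 0) by (assert (H := exp_pos u); nra).
    assert (xi * exp u / sigma < 0).
    { unfold Rdiv. assert (0 < / sigma) by (apply Rinv_0_lt_compat; lra). nra. } lra. }
  assert (Eq1 : forall t, sigma / xi * (t - 1) = - sigma / xi * (1 - t)) by (intros; field; lra).
  assert (Hpos : forall t, t < 1 -> 0 < sigma / xi * (t - 1)).
  { intros t Ht. rewrite Eq1. apply Rmult_lt_0_compat; lra. }
  assert (Hdom : forall t, 0 < t < 1 -> phi t < B).
  { intros t Ht. unfold phi, B. apply ln_increasing. apply Hpos; lra.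
    rewrite Eq1. rewrite <- (Rmult_1_r (- sigma / xi)) at 2. apply Rmult_lt_compat_l; lra. }
  set (F := fun t => - S (phi t)).
  assert (DF : forall t, 0 < t < 1 -> is_derive F t (Rpower t (1 - / xi - 1) / (1 - t))).
  { intros t Ht. assert (Ht' := Hpos t (proj2 Ht)). unfold F. eapply dR_eq.
    apply dR_opp. apply chainS. apply DS. apply Hdom; auto.
    unfold phi. auto_derive. exact Ht'.
    reflexivity.
    unfold phi, sN, ww, Rpower.
    rewrite exp_ln by exact Ht'.
    replace (1 + xi * (sigma / xi * (t - 1)) / sigma) with t by (field; repeat split; lra).
    replace (1 - / xi - 1) with (- / xi) by ring.
    field. repeat split; try lra. }
  assert (HF : has_improper_integral (fun t => Rpower t (1 - / xi - 1) / (1 - t)) 0 (Some x) (0 - - Sinf)).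
  { apply imp with F.
    - simpl; auto.
    - intros t Ht Hb. simpl in Hb. split. apply DF; lra.
      apply cont_of_ex. unfold Rpower. auto_derive. repeat split; lra.
    - intros eps He. destruct (LS eps He) as [d0 [M [Hd0 K]]].
      assert (Hed : exp (- d0) < 1) by (rewrite <- exp_0; apply exp_increasing; lra).
      exists (Rmin x (1 - exp (- d0))). split. apply Rmin_pos; lra.
      intros t Ht. assert (m1 := Rmin_l x (1 - exp (- d0))). assert (m2 := Rmin_r x (1 - exp (- d0))).
      assert (Hp : B - d0 < phi t < B).
      { split; [|apply Hdom; lra].
        unfold phi. rewrite Eq1. rewrite ln_mult by lra. fold B.
        assert (- d0 < ln (1 - t)); [|lra].
        rewrite <- (ln_exp (- d0)). apply ln_increasing. apply exp_pos. lra. }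
      specialize (K (phi t) Hp). unfold F.
      replace (- S (phi t) - - Sinf) with (- (S (phi t) - Sinf)) by ring.
      rewrite Rabs_Ropp. exact K.
    - replace 0 with (F x).
      + apply cont_LU. eapply cont_of_der. apply DF; lra.
      + unfold F, phi, x.
        replace (sigma / xi * (1 + xi * exp u / sigma - 1)) with (exp u) by (field; lra).
        rewrite ln_exp, S0. ring. }
  unfold is_incBeta0. replace Sinf with (0 - - Sinf) by ring. exact HF.
Qed.

Lemma gamma_zero sigma u Sinf : 0 < sigma ->
  GenConc None (s0 sigma) (p0 sigma) u Sinf ->
  is_uppGamma 0 (exp u / sigma) Sinf.
Proof.
  intros Hs [LS [DS _]].
  set (S := RInt (s0 sigma) u) in *.
  assert (S0 : S u = 0) by (unfold S; rewrite RInt_point; reflexivity).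
  set (phi := fun t => ln (sigma * t)).
  set (x := exp u / sigma).
  assert (Hx0 : 0 < x) by (apply Rdiv_lt_0_compat; auto; apply exp_pos).
  set (F := fun t => S (phi t)).
  assert (DF : forall t, 0 < t -> is_derive F t (Rpower t (0 - 1) * exp (- t))).
  { intros t Ht. unfold F. eapply dR_eq.
    apply chainS. apply DS. exact I.
    unfold phi. auto_derive. apply Rmult_lt_0_compat; auto.
    reflexivity.
    unfold phi, s0, Rpower.
    rewrite exp_ln by (apply Rmult_lt_0_compat; auto).
    replace (sigma * t / sigma) with t by (field; lra).
    replace ((0 - 1) * ln t) with (- ln t) by ring.
    rewrite (exp_Ropp (ln t)), exp_ln by lra. field. lra. }
  assert (HF : has_improper_integral (fun t => Rpower t (0 - 1) * exp (- t)) x None (Sinf - 0)).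
  { apply imp with F.
    - simpl; auto.
    - intros t Ht _. split. apply DF; lra.
      apply cont_of_ex. unfold Rpower. auto_derive. lra.
    - replace 0 with (F x).
      + apply cont_LR. eapply cont_of_der. apply DF; lra.
      + unfold F, phi, x.
        replace (sigma * (exp u / sigma)) with (exp u) by (field; lra).
        rewrite ln_exp, S0. reflexivity.
    - intros eps He. destruct (LS eps He) as [d0 [M [Hd0 K]]].
      exists 1, (exp M / sigma). split. lra. simpl. intros t Ht.
      assert (Hm : 0 < exp M / sigma) by (apply Rdiv_lt_0_compat; auto; apply exp_pos).
      apply K. simpl. unfold phi. rewrite <- (ln_exp M) at 1. apply ln_increasing. apply exp_pos.
      replace (exp M) with (sigma * (exp M / sigma)) by (field; lra).
      apply Rmult_lt_compat_l; lra. }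
  unfold is_uppGamma. replace Sinf with (Sinf - 0) by ring. exact HF.
Qed.

Lemma part1 sigma xi u : 0 < sigma -> (xi < 0 -> u < ln (- sigma / xi)) ->
  exists e : R,
    is_mean_excess sigma xi u e /\
    (0 < xi -> is_incBeta0 (/ (1 + xi * exp u / sigma)) (/ xi) (exgpd_sf sigma xi u * e)) /\
    (xi < 0 -> is_incBeta0 (1 + xi * exp u / sigma) (1 - / xi) (exgpd_sf sigma xi u * e)) /\
    (xi = 0 -> is_uppGamma 0 (exp u / sigma) (exp (- (exp u / sigma)) * e)) /\
    is_cond_tail_exp sigma xi u (u + e).
Proof.
  intros Hs Hu.
  destruct (Rtotal_order xi 0) as [Hx|[Hx|Hx]].
  - specialize (Hu Hx). destruct (neg_case sigma xi u Hs Hx Hu) as [Sinf HG].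
    assert (Hb := beta_neg sigma xi u Sinf Hs Hx Hu HG).
    destruct HG as [_ [_ [H1 H2]]].
    assert (Hp : 0 < sN sigma xi u) by (unfold sN, Rpower; apply exp_pos).
    exists (Sinf / sN sigma xi u).
    unfold is_mean_excess, is_cond_tail_exp, exgpd_pdf, exgpd_sf, exgpd_upper.
    destruct (Req_EM_T xi 0) as [E|_]; [lra|].
    destruct (Rlt_dec xi 0) as [_|N]; [|lra].
    fold (ww sigma xi u). fold (sN sigma xi u).
    change (fun y => (y - u) * (exp y / sigma * Rpower (1 + xi * exp y / sigma) (- / xi - 1)))
      with (fun y => (y - u) * pN sigma xi y).
    change (fun t => t * (exp t / sigma * Rpower (1 + xi * exp t / sigma) (- / xi - 1)))
      with (fun t => t * pN sigma xi t).
    replace (Sinf / sN sigma xi u * sN sigma xi u) with Sinf by (field; lra).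
    replace (sN sigma xi u * (Sinf / sN sigma xi u)) with Sinf by (field; lra).
    replace ((u + Sinf / sN sigma xi u) * sN sigma xi u) with (Sinf + u * sN sigma xi u) by (field; lra).
    split; [exact H1|split; [intros; lra|split; [intros; exact Hb|split; [intros; lra|exact H2]]]].
  - subst xi. destruct (zero_case sigma u Hs) as [Sinf HG].
    assert (Hb := gamma_zero sigma u Sinf Hs HG).
    destruct HG as [_ [_ [H1 H2]]].
    assert (Hp : 0 < s0 sigma u) by (unfold s0; apply exp_pos).
    exists (Sinf / s0 sigma u).
    unfold is_mean_excess, is_cond_tail_exp, exgpd_pdf, exgpd_sf, exgpd_upper.
    destruct (Req_EM_T 0 0) as [_|E]; [|lra].
    destruct (Rlt_dec 0 0) as [N|_]; [lra|].
    fold (s0 sigma u).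
    change (fun y => (y - u) * (/ sigma * exp (y - exp y / sigma)))
      with (fun y => (y - u) * p0 sigma y).
    change (fun t => t * (/ sigma * exp (t - exp t / sigma)))
      with (fun t => t * p0 sigma t).
    replace (Sinf / s0 sigma u * s0 sigma u) with Sinf by (field; lra).
    replace (s0 sigma u * (Sinf / s0 sigma u)) with Sinf by (field; lra).
    replace ((u + Sinf / s0 sigma u) * s0 sigma u) with (Sinf + u * s0 sigma u) by (field; lra).
    split; [exact H1|split; [intros; lra|split; [intros; lra|split; [intros; exact Hb|exact H2]]]].
  - destruct (pos_case sigma xi u Hs Hx) as [Sinf HG].
    assert (Hb := beta_pos sigma xi u Sinf Hs Hx HG).
    destruct HG as [_ [_ [H1 H2]]].
    assert (Hp : 0 < sN sigma xi u) by (unfold sN, Rpower; apply exp_pos).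
    exists (Sinf / sN sigma xi u).
    unfold is_mean_excess, is_cond_tail_exp, exgpd_pdf, exgpd_sf, exgpd_upper.
    destruct (Req_EM_T xi 0) as [E|_]; [lra|].
    destruct (Rlt_dec xi 0) as [N|_]; [lra|].
    fold (ww sigma xi u). fold (sN sigma xi u).
    change (fun y => (y - u) * (exp y / sigma * Rpower (1 + xi * exp y / sigma) (- / xi - 1)))
      with (fun y => (y - u) * pN sigma xi y).
    change (fun t => t * (exp t / sigma * Rpower (1 + xi * exp t / sigma) (- / xi - 1)))
      with (fun t => t * pN sigma xi t).
    replace (Sinf / sN sigma xi u * sN sigma xi u) with Sinf by (field; lra).
    replace (sN sigma xi u * (Sinf / sN sigma xi u)) with Sinf by (field; lra).
    replace ((u + Sinf / sN sigma xi u) * sN sigma xi u) with (Sinf + u * sN sigma xi u) by (field; lra).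
    split; [exact H1|split; [intros; exact Hb|split; [intros; lra|split; [intros; lra|exact H2]]]].
Qed.

Lemma exp_lt1 z : z < 0 -> exp z < 1.
Proof. intros; rewrite <- exp_0; apply exp_increasing; auto. Qed.
Lemma exp_gt1 z : 0 < z -> 1 < exp z.
Proof. intros; rewrite <- exp_0; apply exp_increasing; auto. Qed.

Lemma quant sigma xi p : 0 < sigma -> xi <> 0 -> 0 < p < 1 ->
  exgpd_cdf sigma xi (exgpd_quantile sigma xi p) = p /\
  (xi < 0 -> exgpd_quantile sigma xi p < ln (- sigma / xi)).
Proof.
  intros Hs Hx Hp.
  set (r := Rpower (1 - p) (- xi)).
  assert (Hl : ln (1 - p) < 0) by (rewrite <- ln_1; apply ln_increasing; lra).
  assert (Hr0 : 0 < r) by (unfold r, Rpower; apply exp_pos).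
  assert (Hpos : 0 < sigma / xi * (r - 1)).
  { destruct (Rlt_dec xi 0) as [Hn|Hn].
    - assert (r < 1). { unfold r, Rpower. apply exp_lt1. nra. }
      replace (sigma / xi * (r - 1)) with (sigma / - xi * (1 - r)) by (field; lra).
      apply Rmult_lt_0_compat. apply Rdiv_lt_0_compat; lra. lra.
    - assert (0 < xi) by lra.
      assert (1 < r). { unfold r, Rpower. apply exp_gt1. nra. }
      apply Rmult_lt_0_compat. apply Rdiv_lt_0_compat; lra. lra. }
  unfold exgpd_quantile. fold r.
  split.
  - unfold exgpd_cdf, exgpd_sf. destruct (Req_EM_T xi 0) as [E|_]; [lra|].
    rewrite exp_ln by exact Hpos.
    replace (1 + xi * (sigma / xi * (r - 1)) / sigma) with r by (field; lra).
    unfold r. rewrite Rpower_mult.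
    replace (- xi * - / xi) with 1 by (field; lra). rewrite Rpower_1; lra.
  - intros Hn. apply ln_increasing; auto.
    assert (r < 1). { unfold r, Rpower. apply exp_lt1. nra. }
    replace (sigma / xi * (r - 1)) with (- sigma / xi * (1 - r)) by (field; lra).
    assert (Hq : 0 < - sigma / xi).
    { replace (- sigma / xi) with (sigma / - xi) by (field; lra). apply Rdiv_lt_0_compat; lra. }
    assert (0 < r) by auto. nra.
Qed.

Theorem mainTheorem15 (sigma xi : R) (Hsigma : 0 < sigma) :
  (forall u : R, (xi < 0 -> u < ln (- sigma / xi)) ->
     exists e : R,
       is_mean_excess sigma xi u e /\
       (0 < xi -> is_incBeta0 (/ (1 + xi * exp u / sigma)) (/ xi)
                              (exgpd_sf sigma xi u * e)) /\
       (xi < 0 -> is_incBeta0 (1 + xi * exp u / sigma) (1 - / xi)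
                              (exgpd_sf sigma xi u * e)) /\
       (xi = 0 -> is_uppGamma 0 (exp u / sigma)
                              (exp (- (exp u / sigma)) * e))) /\
  (xi <> 0 -> forall p : R, 0 < p < 1 ->
     exgpd_cdf sigma xi (exgpd_quantile sigma xi p) = p /\
     exists e : R,
       is_mean_excess sigma xi (exgpd_quantile sigma xi p) e /\
       is_cond_tail_exp sigma xi (exgpd_quantile sigma xi p)
                        (exgpd_quantile sigma xi p + e)).
Proof.
  split.
  - intros u Hu. destruct (part1 sigma xi u Hsigma Hu) as [e [H1 [H2 [H3 [H4 _]]]]].
    exists e; auto.
  - intros Hx p Hp. destruct (quant sigma xi p Hsigma Hx Hp) as [Hc Hq].
    split; auto.
    destruct (part1 sigma xi (exgpd_quantile sigma xi p) Hsigma Hq) as [e [H1 [_ [_ [_ H5]]]]].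
    exists e; auto.
Qed.
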